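(* Let $R$ be a binary relation on a set $A$ such that (i) $R$ is decidable: for all $x,y$, $R\,y\,x$ or $\lnot R\,y\,x$; (ii) $R$ is finitely branching: for every $x$ there is a finite list containing every $y$ with $R\,y\,x$; (iii) accessibility is weakly decidable: for every $x$, $\lnot(x$ accessible$)$ or $\lnot\lnot(x$ accessible$)$. Then accessibility is coreductive: for every $x$ that is not accessible there exists $y$ with $R\,y\,x$ and $y$ not accessible.
   Context: Work in constructive (intuitionistic) logic / Martin-Löf type theory without excluded middle or other axioms. Let $R$ be a binary relation on $A$ (think of $R\,y\,x$ as a reduction step from $x$ to $y$). Accessibility is defined inductively: $x$ is accessible if every $y$ with $R\,y\,x$ is accessible. *)

(* Defs.v *)
From Stdlib Require Import List.

(* Main.v *)
Require Import Defs.
From Stdlib Require Import List.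

Lemma split_list (A : Type) (R : A -> A -> Prop) x
  (Hdec : forall x y : A, R y x \/ ~ R y x)
  (Hwd : forall x : A, ~ Acc R x \/ ~ ~ Acc R x) (l : list A) :
  (exists y, R y x /\ ~ Acc R y) \/
  ~ ~ (forall y, In y l -> R y x -> Acc R y).
Proof.
  induction l as [|a l IH].
  - right. intros H; apply H; intros y [].
  - destruct IH as [IH|IH]; [left; exact IH|].
    destruct (Hdec x a) as [Ha|Ha].
    + destruct (Hwd a) as [Hn|Hn].
      * left; exists a; auto.
      * right. intros C. apply IH; intros H1. apply Hn; intros H2.
        apply C. intros y [<-|Hy] Hr; auto.
    + right. intros C. apply IH; intros H1.
      apply C. intros y [<-|Hy] Hr; [contradiction|auto].
Qed.

Theorem mainTheorem19 (A : Type) (R : A -> A -> Prop)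
  (Hdec : forall x y : A, R y x \/ ~ R y x)
  (Hfin : forall x : A, exists l : list A, forall y : A, R y x -> In y l)
  (Hwd : forall x : A, ~ Acc R x \/ ~ ~ Acc R x) :
  forall x : A, ~ Acc R x -> exists y : A, R y x /\ ~ Acc R y.
Proof.
  intros x Hx. destruct (Hfin x) as [l Hl].
  destruct (split_list A R x Hdec Hwd l) as [H|H]; [exact H|].
  exfalso. apply H; intros H1. apply Hx. constructor. intros y Hy.
  apply H1; auto.
Qed.
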